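(* Let $G$ be the graph consisting of countably many paths $P_1,P_2,\dots$ which pairwise have exactly one vertex $u$ in common, $u$ being the first vertex of each $P_i$, where $P_i$ has $2i$ edges; weight the edges of each $P_i$ alternately $0$ and $1$, starting with weight $0$ on the edge of $P_i$ at $u$. Then $G$ has an almost perfect matching, but $G$ has no matching that is a strongly $w$-minimal perfect or almost perfect matching.
   Context: A matching is perfect if every vertex is covered by it, and almost perfect if exactly one vertex is not covered. For a set $F$ of edges, $w[F]:=\sum_{e\in F}w(e)$. A perfect or almost perfect matching $M$ is strongly $w$-minimal (among perfect and almost perfect matchings) if there is no perfect or almost perfect matching $N$ with $|M\setminus N|,|N\setminus M|<\infty$ and $w[N\setminus M]<w[M\setminus N]$. *)

(* Defs.v *)
(* Vertices: None = u; Some (i,k) = the vertex at distance k+1 from u on the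
   path P_(i+1) (valid iff k < 2*(i+1)).
   Edges: (i,k) = the (k+1)-th edge of P_(i+1) (valid iff k < 2*(i+1)),
   joining the vertices at distance k and k+1 from u on P_(i+1). *)
From Stdlib Require Import Arith List.
Import ListNotations.

Definition V := option (nat * nat).
Definition E := (nat * nat)%type.

Definition isV (v : V) : Prop :=
  match v with None => True | Some (i, k) => k < 2 * (i + 1) end.
Definition isE (e : E) : Prop := snd e < 2 * (fst e + 1).

Definition src (e : E) : V :=
  match e with (i, 0) => None | (i, S k) => Some (i, k) end.
Definition tgt (e : E) : V := Some e.
Definition incident (e : E) (v : V) : Prop := v = src e \/ v = tgt e.

Definition w (e : E) : nat := if Nat.odd (snd e) then 1 else 0.

Definition matching (M : E -> Prop) : Prop :=
  (forall e, M e -> isE e) /\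
  (forall e f v, M e -> M f -> incident e v -> incident f v -> e = f).
Definition covered (M : E -> Prop) (v : V) : Prop :=
  exists e, M e /\ incident e v.
Definition perfect (M : E -> Prop) : Prop :=
  matching M /\ forall v, isV v -> covered M v.
Definition almost_perfect (M : E -> Prop) : Prop :=
  matching M /\ exists v0, isV v0 /\ ~ covered M v0 /\
    forall v, isV v -> v <> v0 -> covered M v.
Definition perf_or_almost (M : E -> Prop) : Prop :=
  perfect M \/ almost_perfect M.

Definition setD (A B : E -> Prop) : E -> Prop := fun e => A e /\ ~ B e.
Definition finite_set (F : E -> Prop) : Prop :=
  exists l : list E, forall e, F e -> In e l.
Definition wsum (F : E -> Prop) (s : nat) : Prop :=
  exists l : list E, NoDup l /\ (forall e, In e l <-> F e) /\
    s = fold_right (fun e acc => w e + acc) 0 l.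

Definition strongly_w_minimal (M : E -> Prop) : Prop :=
  perf_or_almost M /\
  ~ (exists N, perf_or_almost N /\
       finite_set (setD M N) /\ finite_set (setD N M) /\
       exists a b, wsum (setD N M) a /\ wsum (setD M N) b /\ a < b).

(* Main.v *)
Require Import Defs.
From Stdlib Require Import Arith List Lia Classical.
Import ListNotations.

Lemma odd2 t : Nat.odd (2*t) = false.
Proof. rewrite <- (Nat.add_0_l (2*t)), Nat.odd_add_mul_2. reflexivity. Qed.
Lemma odd21 t : Nat.odd (2*t+1) = true.
Proof. rewrite Nat.add_comm, Nat.odd_add_mul_2. reflexivity. Qed.
Lemma parity k : (exists t, k = 2*t /\ Nat.odd k = false) \/
                 (exists t, k = 2*t+1 /\ Nat.odd k = true).
Proof.
  destruct (Nat.Even_or_Odd k) as [[t Ht]|[t Ht]]; subst.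
  - left; exists t; split; [reflexivity| apply odd2].
  - right; exists t; split; [reflexivity| apply odd21].
Qed.
Lemma oddS n : Nat.odd (S n) = negb (Nat.odd n).
Proof. rewrite Nat.odd_succ, Nat.negb_odd; reflexivity. Qed.

Lemma inc_None e : incident e None <-> snd e = 0.
Proof.
  destruct e as [a [|b]]; unfold incident, src, tgt; simpl; split; intros H;
  try discriminate; auto.
  destruct H; discriminate.
Qed.
Lemma inc_Some e a b : incident e (Some (a,b)) <-> e = (a,b) \/ e = (a, S b).
Proof.
  destruct e as [x [|y]]; unfold incident, src, tgt; simpl; split; intros H.
  all: repeat destruct H as [H|H]; try discriminate; inversion H; subst;
    first [left; reflexivity | right; reflexivity].
Qed.

Lemma matching_local (M : E -> Prop) :
  (forall e, M e -> isE e) ->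
  (forall j k, M (j,k) -> M (j, S k) -> False) ->
  (forall a b, M (a,0) -> M (b,0) -> a = b) -> matching M.
Proof.
  intros H1 H2 H3; split; [exact H1|].
  intros e f v He Hf Ie If.
  destruct v as [[a b]|].
  - apply inc_Some in Ie; apply inc_Some in If.
    destruct Ie as [->| ->]; destruct If as [->| ->]; try reflexivity;
    exfalso; [apply (H2 a b He Hf) | apply (H2 a b Hf He)].
  - apply inc_None in Ie; apply inc_None in If.
    destruct e as [ea eb]; destruct f as [fa fb]; simpl in *; subst.
    f_equal; auto.
Qed.

Lemma m_consec M j k : matching M -> M (j,k) -> M (j, S k) -> False.
Proof.
  intros [_ H] A B. assert (X := H _ _ (Some (j,k)) A B).
  assert ((j,k) = (j, S k)) by (apply X; apply inc_Some; auto).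
  inversion H0; lia.
Qed.
Lemma m_zero M a b : matching M -> M (a,0) -> M (b,0) -> a = b.
Proof.
  intros [_ H] A B. assert (X := H _ _ None A B).
  assert ((a,0) = (b,0)) by (apply X; apply inc_None; auto).
  inversion H0; auto.
Qed.
Lemma cov_Some M a b : covered M (Some (a,b)) <-> M (a,b) \/ M (a, S b).
Proof.
  unfold covered; split.
  - intros [e [He Ie]]; apply inc_Some in Ie; destruct Ie; subst; auto.
  - intros [H|H]; eexists; split; eauto; apply inc_Some; auto.
Qed.
Lemma cov_None M : covered M None <-> exists a, M (a,0).
Proof.
  unfold covered; split.
  - intros [[a b] [He Ie]]; apply inc_None in Ie; simpl in Ie; subst; eauto.
  - intros [a H]; exists (a,0); split; auto; apply inc_None; auto.
Qed.

Lemma prop_par M j s c : matching M -> (M (j,s) <-> Nat.odd s = c) ->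
  forall d, (forall k, s <= k < s + d -> covered M (Some (j,k))) ->
  (M (j, s+d) <-> Nat.odd (s+d) = c).
Proof.
  intros Hm H0 d; induction d as [|d IH]; intros Hc.
  - rewrite Nat.add_0_r; auto.
  - replace (s + S d) with (S (s+d)) by lia.
    assert (IH' := IH (fun k Hk => Hc k ltac:(lia))).
    assert (C := Hc (s+d) ltac:(lia)). apply cov_Some in C.
    assert (NB : M (j, s+d) -> M (j, S (s+d)) -> False) by (apply m_consec; auto).
    rewrite oddS. destruct (Nat.odd (s+d)), c; simpl in *; split; intro X;
    try reflexivity; try discriminate.
    + exfalso; apply NB; [apply IH'; reflexivity | exact X].
    + destruct C as [C|C]; [apply IH' in C; discriminate | exact C].
    + destruct C as [C|C]; [apply IH' in C; discriminate | exact C].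
    + exfalso; apply NB; [apply IH'; reflexivity | exact X].
Qed.
Definition fsum (l : list E) := fold_right (fun e acc => w e + acc) 0 l.

Lemma fsum_app l1 l2 : fsum (l1 ++ l2) = fsum l1 + fsum l2.
Proof. induction l1; simpl; auto. unfold fsum in *; simpl; rewrite IHl1; lia. Qed.

Lemma sum_odd a s n : fsum (map (fun t => (a, 2*t+1)) (seq s n)) = n.
Proof.
  revert s; induction n; intros s; [reflexivity|].
  unfold fsum in *; cbn [map seq fold_right]. rewrite IHn. unfold w at 1; cbn [snd]. rewrite odd21. lia.
Qed.
Lemma sum_even a s n : fsum (map (fun t => (a, 2*t)) (seq s n)) = 0.
Proof.
  revert s; induction n; intros s; [reflexivity|].
  unfold fsum in *; cbn [map seq fold_right]. rewrite IHn. unfold w at 1; cbn [snd]. rewrite odd2. lia.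
Qed.

Lemma NoDup_map_inj {A B} (f : A -> B) l :
  (forall x y, f x = f y -> x = y) -> NoDup l -> NoDup (map f l).
Proof.
  intros Hf Hl; induction Hl; simpl; constructor; auto.
  intros Hin; apply in_map_iff in Hin as [y [Hy Hy']].
  apply Hf in Hy; subst; auto.
Qed.

Lemma in_odd (i n a k : nat) : In (a,k) (map (fun t => (i, 2*t+1)) (seq 0 n)) <->
  a = i /\ k < 2*n /\ Nat.odd k = true.
Proof.
  rewrite in_map_iff; split.
  - intros [t [Ht Hin]]; apply in_seq in Hin; inversion Ht; subst.
    split; auto; split; [lia| apply odd21].
  - intros [-> [Hk Ho]].
    destruct (parity k) as [[t [-> Ho']]|[t [-> Ho']]]; [congruence|].
    exists t; split; auto; apply in_seq; lia.
Qed.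
Lemma in_even (i n a k : nat) : In (a,k) (map (fun t => (i, 2*t)) (seq 0 n)) <->
  a = i /\ k < 2*n /\ Nat.odd k = false.
Proof.
  rewrite in_map_iff; split.
  - intros [t [Ht Hin]]; apply in_seq in Hin; inversion Ht; subst.
    split; auto; split; [lia| apply odd2].
  - intros [-> [Hk Ho]].
    destruct (parity k) as [[t [-> Ho']]|[t [-> Ho']]]; [|congruence].
    exists t; split; auto; apply in_seq; lia.
Qed.
Lemma nodup_odd (i n : nat) : NoDup (map (fun t => (i, 2*t+1)) (seq 0 n)).
Proof. apply NoDup_map_inj; [intros x y H; inversion H; lia| apply seq_NoDup]. Qed.
Lemma nodup_even (i n : nat) : NoDup (map (fun t => (i, 2*t)) (seq 0 n)).
Proof. apply NoDup_map_inj; [intros x y H; inversion H; lia| apply seq_NoDup]. Qed.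

Lemma conclude (M N : E -> Prop) l1 l2 :
  perf_or_almost N ->
  NoDup l1 -> (forall e, In e l1 <-> setD N M e) ->
  NoDup l2 -> (forall e, In e l2 <-> setD M N e) ->
  fsum l1 < fsum l2 ->
  exists N, perf_or_almost N /\
       finite_set (setD M N) /\ finite_set (setD N M) /\
       exists a b, wsum (setD N M) a /\ wsum (setD M N) b /\ a < b.
Proof.
  intros HN D1 I1 D2 I2 Hlt. exists N; split; auto.
  split; [exists l2; intros e; apply I2|].
  split; [exists l1; intros e; apply I1|].
  exists (fsum l1), (fsum l2); split; [|split; auto].
  - exists l1; auto.
  - exists l2; auto.
Qed.

Lemma prop0 M j c : matching M -> (M (j,0) <-> Nat.odd 0 = c) ->
  forall d, (forall k, k < d -> covered M (Some (j,k))) ->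
  (M (j,d) <-> Nat.odd d = c).
Proof.
  intros Hm H0 d Hc. apply (prop_par M j 0 c Hm H0 d). intros k Hk; apply Hc; lia.
Qed.

Lemma part1 : exists M, almost_perfect M.
Proof.
  exists (fun e => isE e /\ Nat.odd (snd e) = true). split.
  - apply matching_local.
    + intros e [H _]; auto.
    + intros j k [_ A] [_ B]; simpl in *. rewrite oddS, A in B; discriminate.
    + intros a b [_ A]; discriminate.
  - exists None; split; [exact I|split].
    + intros H; apply cov_None in H as [a [_ H]]; discriminate.
    + intros [[a b]|] Hv Hne; [|congruence].
      apply cov_Some. unfold isE, isV in *; simpl in *.
      destruct (parity b) as [[t [-> Ho]]|[t [-> Ho]]].
      * right; split; [lia|]. rewrite oddS, Ho; reflexivity.
      * left; split; [lia| exact Ho].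
Qed.
Definition Better (M : E -> Prop) : Prop := exists N, perf_or_almost N /\
       finite_set (setD M N) /\ finite_set (setD N M) /\
       exists a b, wsum (setD N M) a /\ wsum (setD M N) b /\ a < b.

Lemma caseA M : matching M ->
  (forall j k, k < 2*(j+1) -> (M (j,k) <-> Nat.odd k = true)) -> Better M.
Proof.
  intros Hm Hc.
  assert (CM : forall a k, M (a,k) <-> k < 2*(a+1) /\ Nat.odd k = true).
  { intros a k; split.
    - intros H. assert (HE := proj1 Hm _ H). unfold isE in HE; simpl in HE.
      split; auto. apply (Hc a k HE); auto.
    - intros [H1 H2]; apply (Hc a k H1); auto. }
  set (N := fun e : E => isE e /\ ((fst e = 0 /\ snd e = 0) \/
                                  (fst e <> 0 /\ Nat.odd (snd e) = true))).
  apply (conclude M N [(0,0)] [(0,1)]).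
  - right. split.
    + apply matching_local.
      * intros e [H _]; auto.
      * intros j k [_ [[A B]|[A B]]] [_ [[C D]|[C D]]]; simpl in *; try lia.
        rewrite oddS, B in D; discriminate.
      * intros a b [_ [[A _]|[_ A]]] [_ [[B _]|[_ B]]]; simpl in *;
        try discriminate; lia.
    + exists (Some (0,1)); split; [unfold isV; lia|split].
      * intros H; apply cov_Some in H as [[_ [[A B]|[A B]]]|[HE _]];
        simpl in *; try lia. unfold isE in HE; simpl in HE; lia.
      * intros [[a b]|] Hv Hne.
        -- apply cov_Some. unfold isE, isV, N in *; simpl in *.
           destruct (Nat.eq_dec a 0) as [->|Ha].
           ++ left; unfold isE; simpl; split; [lia|]. left; split; auto.
              destruct b as [|[|b]]; auto; [congruence| lia].
           ++ destruct (parity b) as [[t [-> Ho]]|[t [-> Ho]]].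
              ** right; unfold isE; cbn [fst snd]; split; [lia|]. right; split; auto. rewrite oddS, Ho; reflexivity.
              ** left; unfold isE; cbn [fst snd]; split; [lia|]. right; split; auto.
        -- apply cov_None. exists 0. unfold N, isE; simpl; split; [lia|auto].
  - repeat constructor; simpl; tauto.
  - intros [a k]; unfold setD, N, isE; simpl; rewrite CM; split.
    + intros [H|[]]; inversion H; subst; simpl; split; [split; [lia|auto]|].
      intros [_ H1]; discriminate.
    + intros [[H1 [[A B]|[A B]]] H2]; subst.
      * auto.
      * exfalso; apply H2; auto.
  - repeat constructor; simpl; tauto.
  - intros [a k]; unfold setD, N, isE; simpl; rewrite CM; split.
    + intros [H|[]]; inversion H; subst; simpl; split; [split; [lia|auto]|].
      intros [_ [[_ X]|[X _]]]; [discriminate| lia].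
    + intros [[H1 H3] H2].
      destruct (Nat.eq_dec a 0) as [->|Ha].
      * left. destruct k as [|[|k]]; [discriminate| reflexivity| lia].
      * exfalso; apply H2; split; [lia|]; right; auto.
  - cbv. lia.
Qed.
Lemma caseB1 M i m : matching M ->
  (forall v, isV v -> v <> Some (i,m) -> covered M v) ->
  ~ covered M (Some (i,m)) -> Nat.odd m = true -> S (S m) < 2*(i+1) -> Better M.
Proof.
  intros Hm Hc Hu Ho Hlt.
  assert (NM0 : ~ M (i,m)) by (intro X; apply Hu, cov_Some; auto).
  assert (NM1 : ~ M (i,S m)) by (intro X; apply Hu, cov_Some; auto).
  assert (M2 : M (i, S (S m))).
  { assert (C := Hc (Some (i, S m)) ltac:(unfold isV; lia) ltac:(intro X; inversion X; lia)).
    apply cov_Some in C as [C|C]; tauto. }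
  set (N := fun e : E => (M e /\ e <> (i, S (S m))) \/ e = (i, S m)).
  apply (conclude M N [(i,S m)] [(i,S (S m))]).
  - right. split.
    + apply matching_local.
      * intros e [[H _]| ->]; [apply (proj1 Hm); auto| unfold isE; simpl; lia].
      * intros j k [[A A']|A] [[B B']|B].
        -- exact (m_consec M j k Hm A B).
        -- inversion B; subst; congruence.
        -- inversion A; subst; tauto.
        -- inversion A; subst; inversion B; lia.
      * intros a b [[A _]|A] [[B _]|B]; try discriminate.
        exact (m_zero M a b Hm A B).
    + exists (Some (i, S (S m))); split; [unfold isV; lia|split].
      * intros H; apply cov_Some in H as [[[A A']|A]|[[A A']|A]].
        -- congruence.
        -- inversion A; lia.
        -- exact (m_consec M i (S (S m)) Hm M2 A).
        -- inversion A; lia.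
      * intros v Hv Hne.
        destruct (classic (v = Some (i,m))) as [->|H1].
        { exists (i, S m); split; [right; auto| apply inc_Some; auto]. }
        destruct (classic (v = Some (i,S m))) as [->|H2].
        { exists (i, S m); split; [right; auto| apply inc_Some; auto]. }
        destruct (Hc v Hv H1) as [e [He Ie]].
        destruct (classic (e = (i, S (S m)))) as [->|H3].
        { exfalso. unfold incident, src, tgt in Ie. destruct Ie as [X|X]; [apply H2|apply Hne]; exact X. }
        exists e; split; auto; left; auto.
  - repeat constructor; simpl; tauto.
  - intros e; unfold setD, N; simpl; split.
    + intros [H|[]]; subst; split; auto.
    + intros [[[A _]|A] B]; [tauto| left; auto].
  - repeat constructor; simpl; tauto.
  - intros e; unfold setD, N; simpl; split.
    + intros [H|[]]; subst; split; auto.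
      intros [[_ A]|A]; [congruence| inversion A; lia].
    + intros [A B]. left. apply NNPP; intro C; apply B; left; auto.
  - unfold fsum, w; simpl. rewrite (oddS (S m)), (oddS m), Ho. simpl. lia.
Qed.
Lemma caseB2 M i : matching M ->
  (forall k, k < 2*(i+1) -> (M (i,k) <-> Nat.odd k = false)) ->
  (forall k, k < 2*(i+2) -> (M (i+1,k) <-> Nat.odd k = true)) ->
  (forall a, M (a,0) -> a = i) ->
  (forall a b, b < 2*(a+1) -> a <> i -> covered M (Some (a,b))) -> Better M.
Proof.
  intros Hm CI CJ Hz Hc.
  assert (HE : forall a k, M (a,k) -> k < 2*(a+1)).
  { intros a k H; exact (proj1 Hm _ H). }
  set (N := fun e : E => (M e /\ fst e <> i /\ fst e <> i+1) \/
     (fst e = i /\ isE e /\ Nat.odd (snd e) = true) \/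
     (fst e = i+1 /\ isE e /\ Nat.odd (snd e) = false)).
  apply (conclude M N
    (map (fun t => (i, 2*t+1)) (seq 0 (i+1)) ++ map (fun t => (i+1, 2*t)) (seq 0 (i+2)))
    (map (fun t => (i, 2*t)) (seq 0 (i+1)) ++ map (fun t => (i+1, 2*t+1)) (seq 0 (i+2)))).
  - right. split.
    + apply matching_local.
      * intros e [[H _]|[[_ [H _]]|[_ [H _]]]]; auto. apply (proj1 Hm); auto.
      * intros j k [[A [A1 A2]]|[[A1 [_ A2]]|[A1 [_ A2]]]]
                   [[B [B1 B2]]|[[B1 [_ B2]]|[B1 [_ B2]]]]; simpl in *; try lia.
        -- exact (m_consec M j k Hm A B).
        -- rewrite oddS, A2 in B2; discriminate.
        -- rewrite oddS, A2 in B2; discriminate.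
      * intros a b [[A [A1 A2]]|[[A1 [_ A2]]|[A1 [_ A2]]]]
                   [[B [B1 B2]]|[[B1 [_ B2]]|[B1 [_ B2]]]]; simpl in *;
        try discriminate; try lia.
        -- apply Hz in A; lia.
        -- apply Hz in A; lia.
        -- apply Hz in B; lia.
    + exists (Some (i+1, 2*i+3)); split; [unfold isV; lia|split].
      * intros H; apply cov_Some in H.
        destruct H as [[[_ [_ A]]|[[A _]|[_ [_ A]]]]|[[_ [_ A]]|[[A _]|[_ [A _]]]]];
        cbn [fst snd] in *; try lia.
        -- replace (2*i+3) with (2*(i+1)+1) in A by lia. rewrite odd21 in A; discriminate.
        -- unfold isE in A; simpl in A; lia.
      * intros [[a b]|] Hv Hne.
        -- unfold isV in Hv. apply cov_Some.
           destruct (Nat.eq_dec a i) as [->|Ha].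
           ++ destruct (parity b) as [[t [-> Ho]]|[t [-> Ho]]].
              ** right; right; left; unfold isE; cbn [fst snd]; split; [auto|split; [lia|]].
                 rewrite oddS, Ho; reflexivity.
              ** left; right; left; unfold isE; cbn [fst snd]; (split; [auto|split; [lia|auto]]).
           ++ destruct (Nat.eq_dec a (i+1)) as [->|Ha'].
              ** destruct (parity b) as [[t [-> Ho]]|[t [-> Ho]]].
                 --- left; right; right; unfold isE; cbn [fst snd]; (split; [auto|split; [lia|auto]]).
                 --- assert (t <> i+1) by (intro; subst; apply Hne; f_equal; f_equal; lia).
                     right; right; right; unfold isE; cbn [fst snd]; split; [auto|split; [lia|]].
                     rewrite oddS, Ho; reflexivity.
              ** destruct (proj1 (cov_Some M a b) (Hc a b Hv Ha)) as [X|X]; [left|right]; left;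
                 simpl; auto.
        -- apply cov_None. exists (i+1). right; right; unfold isE; simpl; split; [auto|split; [lia|reflexivity]].
  - apply NoDup_app; [apply nodup_odd| apply nodup_even|].
    intros [a k] H1 H2; apply in_odd in H1; apply in_even in H2; lia.
  - intros [a k]; rewrite in_app_iff, in_odd, in_even; unfold setD, N, isE; simpl.
    split.
    + intros [[-> [Hk Ho]]|[-> [Hk Ho]]].
      * split; [right; left; (split; [auto|split; [lia|auto]])|].
        rewrite CI by lia; congruence.
      * split; [right; right; (split; [auto|split; [lia|auto]])|].
        rewrite CJ by lia; congruence.
      + intros [[[A [A1 A2]]|[[A1 [A2 A3]]|[A1 [A2 A3]]]] B]; [tauto| |]; subst.
      * left; (split; [auto|split; [lia|auto]]).
      * right; (split; [auto|split; [lia|auto]]).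
  - apply NoDup_app; [apply nodup_even| apply nodup_odd|].
    intros [a k] H1 H2; apply in_even in H1; apply in_odd in H2; lia.
  - intros [a k]; rewrite in_app_iff, in_odd, in_even; unfold setD, N, isE; simpl.
    split.
    + intros [[-> [Hk Ho]]|[-> [Hk Ho]]].
      * split; [rewrite CI by lia; auto|].
        intros [[_ [X _]]|[[_ [_ X]]|[X _]]]; try congruence; lia.
      * split; [rewrite CJ by lia; auto|].
        intros [[_ [_ X]]|[[X _]|[_ [_ X]]]]; try congruence; lia.
    + intros [A B].
      destruct (Nat.eq_dec a i) as [->|Ha].
      * left; split; auto; split; [apply HE in A; lia|]. apply (CI k); auto; apply HE in A; lia.
      * destruct (Nat.eq_dec a (i+1)) as [->|Ha'].
        -- right; split; auto; split; [apply HE in A; lia|]. apply (CJ k); auto; apply HE in A; lia.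
        -- exfalso; apply B; left; auto.
  - rewrite !fsum_app, sum_odd, sum_even, sum_odd, sum_even. lia.
Qed.
Lemma core M v0 : matching M -> (forall v, isV v -> v <> v0 -> covered M v) ->
  ((forall v, isV v -> covered M v) \/ ~ covered M v0) -> Better M.
Proof.
  intros Hm Hc Hd.
  destruct (classic (covered M None)) as [HN|HN].
  - apply cov_None in HN as [i Hi].
    assert (Hz : forall a, M (a,0) -> a = i) by (intros a Ha; exact (m_zero M a i Hm Ha Hi)).
    assert (Ex : exists m, m < 2*(i+1) /\ ~ covered M (Some (i,m))).
    { apply NNPP; intro Hne.
      assert (Call : forall k, k < 2*(i+1) -> covered M (Some (i,k))).
      { intros k Hk; apply NNPP; intro X; apply Hne; exists k; auto. }
      assert (P := prop0 M i false Hm ltac:(split; auto) (2*i+1)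
                    ltac:(intros k Hk; apply Call; lia)).
      rewrite odd21 in P.
      destruct (proj1 (cov_Some M i (2*i+1)) (Call (2*i+1) ltac:(lia))) as [X|X].
      - apply P in X; discriminate.
      - apply (proj1 Hm) in X; unfold isE in X; simpl in X; lia. }
    destruct Ex as [m [Hmlt Hu]].
    assert (Hv0 : v0 = Some (i,m)).
    { apply NNPP; intro X; apply Hu, Hc; [unfold isV; lia| congruence]. }
    subst v0.
    assert (Hc' : forall v, isV v -> v <> Some (i,m) -> covered M v) by exact Hc.
    assert (NM0 : ~ M (i,m)) by (intro X; apply Hu, cov_Some; auto).
    assert (Hoddm : Nat.odd m = true).
    { destruct (Nat.odd m) eqn:E0; auto. exfalso; apply NM0.
      apply (prop0 M i false Hm ltac:(split; auto) m); auto.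
      intros k Hk; apply Hc; [unfold isV; lia| intro X; inversion X; lia]. }
    destruct (parity m) as [[t [Ht Ho]]|[t [Ht Ho]]]; [congruence|].
    destruct (Nat.eq_dec t i) as [->|Hti].
    + apply (caseB2 M i Hm).
      * intros k Hk. apply (prop0 M i false Hm ltac:(split; auto) k).
        intros k' Hk'; apply Hc; [unfold isV; lia| intro X; inversion X; lia].
      * intros k Hk. apply (prop0 M (i+1) true Hm).
        { split; [intro X; apply Hz in X; lia| discriminate]. }
        intros k' Hk'; apply Hc; [unfold isV; lia| intro X; inversion X; lia].
      * exact Hz.
      * intros a b Hb Ha; apply Hc; [unfold isV; lia| congruence].
    + apply (caseB1 M i m Hm Hc Hu Hoddm). lia.
  - assert (Hv0 : v0 = None).
    { apply NNPP; intro X; apply HN, Hc; [exact I| congruence]. }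
    subst v0.
    apply (caseA M Hm). intros j k Hk.
    apply (prop0 M j true Hm).
    + split; [intro X; exfalso; apply HN, cov_None; eauto| discriminate].
    + intros k' Hk'; apply Hc; [unfold isV; lia| congruence].
Qed.

Theorem mainTheorem7 :
  (exists M, almost_perfect M) /\ ~ (exists M, strongly_w_minimal M).
Proof.
  split; [exact part1|].
  intros [M [HM HN]]. apply HN. fold (Better M).
  destruct HM as [[Hm Hc]|[Hm [v0 [Hv0 [Hu Hc]]]]].
  - apply (core M None Hm); auto.
  - apply (core M v0 Hm); auto.
Qed.
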